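(* Let $Q$ be a Jordan loop and $x\in Q$ such that $x^3x^3=x^6$. Then (i) $x^6$ is well-defined; (ii) $x^7$ is well-defined; (iii) $x^6x^{-1}=x^5$; (iv) $x^8$ is well-defined.
   Context: A loop is a set $Q$ with a binary operation (juxtaposition) and neutral element $e$ such that for all $a,b$ the equations $ax=b$, $ya=b$ have unique solutions. A Jordan loop is a commutative loop satisfying $x^2(yx)=(x^2y)x$. For $k\ge 0$, $x^k$ denotes the right-associated product $x(x(\cdots(xe)\cdots))$ with $k$ factors $x$. We say $x^k$ is well-defined if every bracketing of a product of $k$ copies of $x$ gives the same value. $x^{-1}$ denotes the (two-sided) inverse of $x$. *)

(* Defs.v *)
Definition is_loop {Q : Type} (op : Q -> Q -> Q) (e : Q) : Prop :=
  (forall x, op e x = x /\ op x e = x) /\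
  (forall a b, exists! x, op a x = b) /\
  (forall a b, exists! y, op y a = b).

Fixpoint xpow {Q : Type} (op : Q -> Q -> Q) (e : Q) (k : nat) (x : Q) : Q :=
  match k with
  | O => e
  | S k' => op x (xpow op e k' x)
  end.

Definition is_jordan_loop {Q : Type} (op : Q -> Q -> Q) (e : Q) : Prop :=
  is_loop op e /\
  (forall x y, op x y = op y x) /\
  (forall x y, op (xpow op e 2 x) (op y x) = op (op (xpow op e 2 x) y) x).

Inductive bracketing : Type :=
  | bleaf : bracketing
  | bnode : bracketing -> bracketing -> bracketing.

Fixpoint nleaves (t : bracketing) : nat :=
  match t with
  | bleaf => 1
  | bnode l r => nleaves l + nleaves r
  end.

Fixpoint beval {Q : Type} (op : Q -> Q -> Q) (x : Q) (t : bracketing) : Q :=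
  match t with
  | bleaf => x
  | bnode l r => op (beval op x l) (beval op x r)
  end.

(* x^k is well-defined: every bracketing of a product of k copies of x
   gives the same value (namely the right-associated one, x^k). *)
Definition pow_well_defined {Q : Type} (op : Q -> Q -> Q) (e : Q) (k : nat) (x : Q) : Prop :=
  forall t : bracketing, nleaves t = k -> beval op x t = xpow op e k x.

(* Main.v *)
Require Import Defs.
From Stdlib Require Import Lia.

Lemma nleaves_pos (t : bracketing) : 1 <= nleaves t.
Proof. induction t; simpl; lia. Qed.

Lemma wd_lemma {Q : Type} (op : Q -> Q -> Q) (e x : Q) (N : nat)
  (Hx : op x e = x)
  (Hs : forall l r, 1 <= l -> 1 <= r -> l + r <= N ->
        op (xpow op e l x) (xpow op e r x) = xpow op e (l + r) x) :
  forall t, nleaves t <= N -> beval op x t = xpow op e (nleaves t) x.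
Proof.
  induction t as [|l IHl r IHr]; simpl; intros H.
  - now rewrite Hx.
  - pose proof (nleaves_pos l); pose proof (nleaves_pos r).
    rewrite IHl by lia. rewrite IHr by lia. apply Hs; lia.
Qed.

Lemma wd_final {Q : Type} (op : Q -> Q -> Q) (e x : Q) (N : nat)
  (Hx : op x e = x)
  (Hs : forall l r, 1 <= l -> 1 <= r -> l + r <= N ->
        op (xpow op e l x) (xpow op e r x) = xpow op e (l + r) x) :
  pow_well_defined op e N x.
Proof.
  intros t Ht. rewrite <- Ht. apply (wd_lemma op e x N Hx Hs). lia.
Qed.

Theorem theorem2p8 (Q : Type) (op : Q -> Q -> Q) (e : Q) (x : Q)
  (HQ : is_jordan_loop op e)
  (H3 : op (xpow op e 3 x) (xpow op e 3 x) = xpow op e 6 x) :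
  pow_well_defined op e 6 x /\
  pow_well_defined op e 7 x /\
  (forall xinv : Q, op x xinv = e -> op xinv x = e ->
     op (xpow op e 6 x) xinv = xpow op e 5 x) /\
  pow_well_defined op e 8 x.
Proof.
  destruct HQ as [[Hid [Hl Hr]] [Hc HJ0]].
  assert (Hel : forall a, op e a = a) by (intro a; apply Hid).
  assert (Hxe : op x e = x) by apply Hid.
  assert (HJ : forall a b, op (op a a) (op b a) = op (op (op a a) b) a).
  { intros a b. pose proof (HJ0 a b) as H. simpl in H.
    rewrite (proj2 (Hid a)) in H. exact H. }
  assert (Hcan : forall a b c, op a b = op a c -> b = c).
  { intros a b c H. destruct (Hl a (op a b)) as [z [_ Hz]].
    rewrite <- (Hz b eq_refl). apply Hz. symmetry; exact H. }
  destruct (Hl x e) as [u [Hxu _]].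
  simpl in H3.
  clear HJ0 Hid Hl Hr.
  pose proof (HJ x x) as J0.
  pose proof (HJ x u) as J1.
  pose proof (HJ x (op u u)) as J2.
  pose proof (HJ x (op (op x (op x (op x x))) (op u u))) as J3.
  pose proof (HJ u x) as J4.
  pose proof (HJ u (op x (op x (op x (op x (op x x)))))) as J5.
  pose proof (HJ u (op x (op x (op x x)))) as J6.
  pose proof (HJ u (op u u)) as J7.
  pose proof (HJ u (op (op x (op x (op x (op x x)))) (op u u))) as J8.
  pose proof (HJ (op x x) (op u u)) as J9.
  pose proof (HJ (op x (op x x)) (op u u)) as J10.
  pose proof (HJ (op x (op x x)) (op (op u u) (op u u))) as J11.
  pose proof (HJ (op u u) (op x (op x x))) as J12.
  pose proof (HJ (op u u) (op x (op x (op x (op x (op x x)))))) as J13.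
  pose proof (HJ (op u u) (op (op x (op x x)) (op u u))) as J14.
  pose proof (HJ (op u u) (op (op x (op x (op x x))) (op u u))) as J15.
  pose proof (HJ (op (op x (op x x)) (op u u)) (op x (op x x))) as J16.
  pose proof (HJ (op (op x (op x x)) (op u u)) (op x (op x (op x x)))) as J17.
  pose proof (HJ (op (op x (op x x)) (op u u)) (op u (op x (op x (op x (op x (op x x))))))) as J18.
  pose proof (HJ (op (op x (op x (op x x))) (op u u)) u) as J19.
  pose proof (HJ (op (op x (op x (op x x))) (op u u)) (op (op u u) (op u u))) as J20.
  pose proof (HJ (op (op x (op x (op x x))) (op u u)) (op (op x (op x x)) (op u u))) as J21.
  pose proof (HJ (op (op x (op x (op x x))) (op u u)) (op (op x (op x (op x x))) (op u u))) as J22.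
  pose proof (HJ (op (op x (op x (op x (op x x)))) (op u u)) u) as J23.
  pose proof (Hc x e) as C0.
  pose proof (Hel x) as EL0a.
  pose proof (Hel e) as EL0b.
  pose proof (Hc x (op x e)) as C1.
  pose proof (Hel x) as EL1a.
  pose proof (Hel (op x e)) as EL1b.
  pose proof (Hc x (op x (op x e))) as C2.
  pose proof (Hel x) as EL2a.
  pose proof (Hel (op x (op x e))) as EL2b.
  pose proof (Hc x (op x (op x (op x e)))) as C3.
  pose proof (Hel x) as EL3a.
  pose proof (Hel (op x (op x (op x e)))) as EL3b.
  pose proof (Hc x (op x (op x (op x (op x e))))) as C4.
  pose proof (Hel x) as EL4a.
  pose proof (Hel (op x (op x (op x (op x e))))) as EL4b.
  pose proof (Hc x (op x (op x (op x (op x (op x e)))))) as C5.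
  pose proof (Hel x) as EL5a.
  pose proof (Hel (op x (op x (op x (op x (op x e)))))) as EL5b.
  pose proof (Hc x (op x (op x (op x (op x (op x (op x e))))))) as C6.
  pose proof (Hel x) as EL6a.
  pose proof (Hel (op x (op x (op x (op x (op x (op x e))))))) as EL6b.
  pose proof (Hc x (op x (op x (op x (op x (op x (op x (op x e)))))))) as C7.
  pose proof (Hel x) as EL7a.
  pose proof (Hel (op x (op x (op x (op x (op x (op x (op x e)))))))) as EL7b.
  pose proof (Hc x u) as C8.
  pose proof (Hel x) as EL8a.
  pose proof (Hel u) as EL8b.
  pose proof (Hc (op x (op x (op x e))) (op x (op x (op x e)))) as C9.
  pose proof (Hel (op x (op x (op x e)))) as EL9a.
  pose proof (Hel (op x (op x (op x e)))) as EL9b.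
  pose proof (Hc x x) as C10.
  pose proof (Hel x) as EL10a.
  pose proof (Hel x) as EL10b.
  pose proof (Hc (op x x) (op x x)) as C11.
  pose proof (Hel (op x x)) as EL11a.
  pose proof (Hel (op x x)) as EL11b.
  pose proof (Hc (op x x) x) as C12.
  pose proof (Hel (op x x)) as EL12a.
  pose proof (Hel x) as EL12b.
  pose proof (Hc (op (op x x) x) x) as C13.
  pose proof (Hel (op (op x x) x)) as EL13a.
  pose proof (Hel x) as EL13b.
  pose proof (Hc u x) as C14.
  pose proof (Hel u) as EL14a.
  pose proof (Hel x) as EL14b.
  pose proof (Hc (op x x) (op u x)) as C15.
  pose proof (Hel (op x x)) as EL15a.
  pose proof (Hel (op u x)) as EL15b.
  pose proof (Hc (op x x) u) as C16.
  pose proof (Hel (op x x)) as EL16a.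
  pose proof (Hel u) as EL16b.
  pose proof (Hc (op (op x x) u) x) as C17.
  pose proof (Hel (op (op x x) u)) as EL17a.
  pose proof (Hel x) as EL17b.
  pose proof (Hc u u) as C18.
  pose proof (Hel u) as EL18a.
  pose proof (Hel u) as EL18b.
  pose proof (Hc (op u u) x) as C19.
  pose proof (Hel (op u u)) as EL19a.
  pose proof (Hel x) as EL19b.
  pose proof (Hc (op x x) (op (op u u) x)) as C20.
  pose proof (Hel (op x x)) as EL20a.
  pose proof (Hel (op (op u u) x)) as EL20b.
  pose proof (Hc (op x x) (op u u)) as C21.
  pose proof (Hel (op x x)) as EL21a.
  pose proof (Hel (op u u)) as EL21b.
  pose proof (Hc (op (op x x) (op u u)) x) as C22.
  pose proof (Hel (op (op x x) (op u u))) as EL22a.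
  pose proof (Hel x) as EL22b.
  pose proof (Hc x (op x x)) as C23.
  pose proof (Hel x) as EL23a.
  pose proof (Hel (op x x)) as EL23b.
  pose proof (Hc x (op x (op x x))) as C24.
  pose proof (Hel x) as EL24a.
  pose proof (Hel (op x (op x x))) as EL24b.
  pose proof (Hc (op x (op x (op x x))) (op u u)) as C25.
  pose proof (Hel (op x (op x (op x x)))) as EL25a.
  pose proof (Hel (op u u)) as EL25b.
  pose proof (Hc (op (op x (op x (op x x))) (op u u)) x) as C26.
  pose proof (Hel (op (op x (op x (op x x))) (op u u))) as EL26a.
  pose proof (Hel x) as EL26b.
  pose proof (Hc (op x x) (op (op (op x (op x (op x x))) (op u u)) x)) as C27.
  pose proof (Hel (op x x)) as EL27a.
  pose proof (Hel (op (op (op x (op x (op x x))) (op u u)) x)) as EL27b.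
  pose proof (Hc (op x x) (op (op x (op x (op x x))) (op u u))) as C28.
  pose proof (Hel (op x x)) as EL28a.
  pose proof (Hel (op (op x (op x (op x x))) (op u u))) as EL28b.
  pose proof (Hc (op (op x x) (op (op x (op x (op x x))) (op u u))) x) as C29.
  pose proof (Hel (op (op x x) (op (op x (op x (op x x))) (op u u)))) as EL29a.
  pose proof (Hel x) as EL29b.
  pose proof (Hc (op u u) (op x u)) as C30.
  pose proof (Hel (op u u)) as EL30a.
  pose proof (Hel (op x u)) as EL30b.
  pose proof (Hc (op (op u u) x) u) as C31.
  pose proof (Hel (op (op u u) x)) as EL31a.
  pose proof (Hel u) as EL31b.
  pose proof (Hc x (op x (op x (op x x)))) as C32.
  pose proof (Hel x) as EL32a.
  pose proof (Hel (op x (op x (op x x)))) as EL32b.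
  pose proof (Hc x (op x (op x (op x (op x x))))) as C33.
  pose proof (Hel x) as EL33a.
  pose proof (Hel (op x (op x (op x (op x x))))) as EL33b.
  pose proof (Hc (op x (op x (op x (op x (op x x))))) u) as C34.
  pose proof (Hel (op x (op x (op x (op x (op x x)))))) as EL34a.
  pose proof (Hel u) as EL34b.
  pose proof (Hc (op u u) (op (op x (op x (op x (op x (op x x))))) u)) as C35.
  pose proof (Hel (op u u)) as EL35a.
  pose proof (Hel (op (op x (op x (op x (op x (op x x))))) u)) as EL35b.
  pose proof (Hc (op u u) (op x (op x (op x (op x (op x x)))))) as C36.
  pose proof (Hel (op u u)) as EL36a.
  pose proof (Hel (op x (op x (op x (op x (op x x)))))) as EL36b.
  pose proof (Hc (op (op u u) (op x (op x (op x (op x (op x x)))))) u) as C37.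
  pose proof (Hel (op (op u u) (op x (op x (op x (op x (op x x))))))) as EL37a.
  pose proof (Hel u) as EL37b.
  pose proof (Hc (op x (op x (op x x))) u) as C38.
  pose proof (Hel (op x (op x (op x x)))) as EL38a.
  pose proof (Hel u) as EL38b.
  pose proof (Hc (op u u) (op (op x (op x (op x x))) u)) as C39.
  pose proof (Hel (op u u)) as EL39a.
  pose proof (Hel (op (op x (op x (op x x))) u)) as EL39b.
  pose proof (Hc (op u u) (op x (op x (op x x)))) as C40.
  pose proof (Hel (op u u)) as EL40a.
  pose proof (Hel (op x (op x (op x x)))) as EL40b.
  pose proof (Hc (op (op u u) (op x (op x (op x x)))) u) as C41.
  pose proof (Hel (op (op u u) (op x (op x (op x x))))) as EL41a.
  pose proof (Hel u) as EL41b.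
  pose proof (Hc (op u u) u) as C42.
  pose proof (Hel (op u u)) as EL42a.
  pose proof (Hel u) as EL42b.
  pose proof (Hc (op u u) (op (op u u) u)) as C43.
  pose proof (Hel (op u u)) as EL43a.
  pose proof (Hel (op (op u u) u)) as EL43b.
  pose proof (Hc (op u u) (op u u)) as C44.
  pose proof (Hel (op u u)) as EL44a.
  pose proof (Hel (op u u)) as EL44b.
  pose proof (Hc (op (op u u) (op u u)) u) as C45.
  pose proof (Hel (op (op u u) (op u u))) as EL45a.
  pose proof (Hel u) as EL45b.
  pose proof (Hc (op x (op x (op x (op x x)))) (op u u)) as C46.
  pose proof (Hel (op x (op x (op x (op x x))))) as EL46a.
  pose proof (Hel (op u u)) as EL46b.
  pose proof (Hc (op (op x (op x (op x (op x x)))) (op u u)) u) as C47.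
  pose proof (Hel (op (op x (op x (op x (op x x)))) (op u u))) as EL47a.
  pose proof (Hel u) as EL47b.
  pose proof (Hc (op u u) (op (op (op x (op x (op x (op x x)))) (op u u)) u)) as C48.
  pose proof (Hel (op u u)) as EL48a.
  pose proof (Hel (op (op (op x (op x (op x (op x x)))) (op u u)) u)) as EL48b.
  pose proof (Hc (op u u) (op (op x (op x (op x (op x x)))) (op u u))) as C49.
  pose proof (Hel (op u u)) as EL49a.
  pose proof (Hel (op (op x (op x (op x (op x x)))) (op u u))) as EL49b.
  pose proof (Hc (op (op u u) (op (op x (op x (op x (op x x)))) (op u u))) u) as C50.
  pose proof (Hel (op (op u u) (op (op x (op x (op x (op x x)))) (op u u)))) as EL50a.
  pose proof (Hel u) as EL50b.
  pose proof (Hc (op u u) (op x x)) as C51.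
  pose proof (Hel (op u u)) as EL51a.
  pose proof (Hel (op x x)) as EL51b.
  pose proof (Hc (op (op x x) (op x x)) (op (op u u) (op x x))) as C52.
  pose proof (Hel (op (op x x) (op x x))) as EL52a.
  pose proof (Hel (op (op u u) (op x x))) as EL52b.
  pose proof (Hc (op (op x x) (op x x)) (op u u)) as C53.
  pose proof (Hel (op (op x x) (op x x))) as EL53a.
  pose proof (Hel (op u u)) as EL53b.
  pose proof (Hc (op (op (op x x) (op x x)) (op u u)) (op x x)) as C54.
  pose proof (Hel (op (op (op x x) (op x x)) (op u u))) as EL54a.
  pose proof (Hel (op x x)) as EL54b.
  pose proof (Hc (op x (op x x)) (op x (op x x))) as C55.
  pose proof (Hel (op x (op x x))) as EL55a.
  pose proof (Hel (op x (op x x))) as EL55b.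
  pose proof (Hc (op u u) (op x (op x x))) as C56.
  pose proof (Hel (op u u)) as EL56a.
  pose proof (Hel (op x (op x x))) as EL56b.
  pose proof (Hc (op (op x (op x x)) (op x (op x x))) (op (op u u) (op x (op x x)))) as C57.
  pose proof (Hel (op (op x (op x x)) (op x (op x x)))) as EL57a.
  pose proof (Hel (op (op u u) (op x (op x x)))) as EL57b.
  pose proof (Hc (op (op x (op x x)) (op x (op x x))) (op u u)) as C58.
  pose proof (Hel (op (op x (op x x)) (op x (op x x)))) as EL58a.
  pose proof (Hel (op u u)) as EL58b.
  pose proof (Hc (op (op (op x (op x x)) (op x (op x x))) (op u u)) (op x (op x x))) as C59.
  pose proof (Hel (op (op (op x (op x x)) (op x (op x x))) (op u u))) as EL59a.
  pose proof (Hel (op x (op x x))) as EL59b.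
  pose proof (Hc (op (op u u) (op u u)) (op x (op x x))) as C60.
  pose proof (Hel (op (op u u) (op u u))) as EL60a.
  pose proof (Hel (op x (op x x))) as EL60b.
  pose proof (Hc (op (op x (op x x)) (op x (op x x))) (op (op (op u u) (op u u)) (op x (op x x)))) as C61.
  pose proof (Hel (op (op x (op x x)) (op x (op x x)))) as EL61a.
  pose proof (Hel (op (op (op u u) (op u u)) (op x (op x x)))) as EL61b.
  pose proof (Hc (op (op x (op x x)) (op x (op x x))) (op (op u u) (op u u))) as C62.
  pose proof (Hel (op (op x (op x x)) (op x (op x x)))) as EL62a.
  pose proof (Hel (op (op u u) (op u u))) as EL62b.
  pose proof (Hc (op (op (op x (op x x)) (op x (op x x))) (op (op u u) (op u u))) (op x (op x x))) as C63.
  pose proof (Hel (op (op (op x (op x x)) (op x (op x x))) (op (op u u) (op u u)))) as EL63a.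
  pose proof (Hel (op x (op x x))) as EL63b.
  pose proof (Hc (op x (op x x)) (op u u)) as C64.
  pose proof (Hel (op x (op x x))) as EL64a.
  pose proof (Hel (op u u)) as EL64b.
  pose proof (Hc (op (op u u) (op u u)) (op (op x (op x x)) (op u u))) as C65.
  pose proof (Hel (op (op u u) (op u u))) as EL65a.
  pose proof (Hel (op (op x (op x x)) (op u u))) as EL65b.
  pose proof (Hc (op (op (op u u) (op u u)) (op x (op x x))) (op u u)) as C66.
  pose proof (Hel (op (op (op u u) (op u u)) (op x (op x x)))) as EL66a.
  pose proof (Hel (op u u)) as EL66b.
  pose proof (Hc (op x (op x (op x (op x (op x x))))) (op u u)) as C67.
  pose proof (Hel (op x (op x (op x (op x (op x x)))))) as EL67a.
  pose proof (Hel (op u u)) as EL67b.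
  pose proof (Hc (op (op u u) (op u u)) (op (op x (op x (op x (op x (op x x))))) (op u u))) as C68.
  pose proof (Hel (op (op u u) (op u u))) as EL68a.
  pose proof (Hel (op (op x (op x (op x (op x (op x x))))) (op u u))) as EL68b.
  pose proof (Hc (op (op u u) (op u u)) (op x (op x (op x (op x (op x x)))))) as C69.
  pose proof (Hel (op (op u u) (op u u))) as EL69a.
  pose proof (Hel (op x (op x (op x (op x (op x x)))))) as EL69b.
  pose proof (Hc (op (op (op u u) (op u u)) (op x (op x (op x (op x (op x x)))))) (op u u)) as C70.
  pose proof (Hel (op (op (op u u) (op u u)) (op x (op x (op x (op x (op x x))))))) as EL70a.
  pose proof (Hel (op u u)) as EL70b.
  pose proof (Hc (op (op x (op x x)) (op u u)) (op u u)) as C71.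
  pose proof (Hel (op (op x (op x x)) (op u u))) as EL71a.
  pose proof (Hel (op u u)) as EL71b.
  pose proof (Hc (op (op u u) (op u u)) (op (op (op x (op x x)) (op u u)) (op u u))) as C72.
  pose proof (Hel (op (op u u) (op u u))) as EL72a.
  pose proof (Hel (op (op (op x (op x x)) (op u u)) (op u u))) as EL72b.
  pose proof (Hc (op (op (op u u) (op u u)) (op (op x (op x x)) (op u u))) (op u u)) as C73.
  pose proof (Hel (op (op (op u u) (op u u)) (op (op x (op x x)) (op u u)))) as EL73a.
  pose proof (Hel (op u u)) as EL73b.
  pose proof (Hc (op (op x (op x (op x x))) (op u u)) (op u u)) as C74.
  pose proof (Hel (op (op x (op x (op x x))) (op u u))) as EL74a.
  pose proof (Hel (op u u)) as EL74b.
  pose proof (Hc (op (op u u) (op u u)) (op (op (op x (op x (op x x))) (op u u)) (op u u))) as C75.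
  pose proof (Hel (op (op u u) (op u u))) as EL75a.
  pose proof (Hel (op (op (op x (op x (op x x))) (op u u)) (op u u))) as EL75b.
  pose proof (Hc (op (op u u) (op u u)) (op (op x (op x (op x x))) (op u u))) as C76.
  pose proof (Hel (op (op u u) (op u u))) as EL76a.
  pose proof (Hel (op (op x (op x (op x x))) (op u u))) as EL76b.
  pose proof (Hc (op (op (op u u) (op u u)) (op (op x (op x (op x x))) (op u u))) (op u u)) as C77.
  pose proof (Hel (op (op (op u u) (op u u)) (op (op x (op x (op x x))) (op u u)))) as EL77a.
  pose proof (Hel (op u u)) as EL77b.
  pose proof (Hc (op (op x (op x x)) (op u u)) (op (op x (op x x)) (op u u))) as C78.
  pose proof (Hel (op (op x (op x x)) (op u u))) as EL78a.
  pose proof (Hel (op (op x (op x x)) (op u u))) as EL78b.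
  pose proof (Hc (op x (op x x)) (op (op x (op x x)) (op u u))) as C79.
  pose proof (Hel (op x (op x x))) as EL79a.
  pose proof (Hel (op (op x (op x x)) (op u u))) as EL79b.
  pose proof (Hc (op (op (op x (op x x)) (op u u)) (op (op x (op x x)) (op u u))) (op (op x (op x x)) (op (op x (op x x)) (op u u)))) as C80.
  pose proof (Hel (op (op (op x (op x x)) (op u u)) (op (op x (op x x)) (op u u)))) as EL80a.
  pose proof (Hel (op (op x (op x x)) (op (op x (op x x)) (op u u)))) as EL80b.
  pose proof (Hc (op (op (op x (op x x)) (op u u)) (op (op x (op x x)) (op u u))) (op x (op x x))) as C81.
  pose proof (Hel (op (op (op x (op x x)) (op u u)) (op (op x (op x x)) (op u u)))) as EL81a.
  pose proof (Hel (op x (op x x))) as EL81b.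
  pose proof (Hc (op (op (op (op x (op x x)) (op u u)) (op (op x (op x x)) (op u u))) (op x (op x x))) (op (op x (op x x)) (op u u))) as C82.
  pose proof (Hel (op (op (op (op x (op x x)) (op u u)) (op (op x (op x x)) (op u u))) (op x (op x x)))) as EL82a.
  pose proof (Hel (op (op x (op x x)) (op u u))) as EL82b.
  pose proof (Hc (op x (op x (op x x))) (op (op x (op x x)) (op u u))) as C83.
  pose proof (Hel (op x (op x (op x x)))) as EL83a.
  pose proof (Hel (op (op x (op x x)) (op u u))) as EL83b.
  pose proof (Hc (op (op (op x (op x x)) (op u u)) (op (op x (op x x)) (op u u))) (op (op x (op x (op x x))) (op (op x (op x x)) (op u u)))) as C84.
  pose proof (Hel (op (op (op x (op x x)) (op u u)) (op (op x (op x x)) (op u u)))) as EL84a.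
  pose proof (Hel (op (op x (op x (op x x))) (op (op x (op x x)) (op u u)))) as EL84b.
  pose proof (Hc (op (op (op x (op x x)) (op u u)) (op (op x (op x x)) (op u u))) (op x (op x (op x x)))) as C85.
  pose proof (Hel (op (op (op x (op x x)) (op u u)) (op (op x (op x x)) (op u u)))) as EL85a.
  pose proof (Hel (op x (op x (op x x)))) as EL85b.
  pose proof (Hc (op (op (op (op x (op x x)) (op u u)) (op (op x (op x x)) (op u u))) (op x (op x (op x x)))) (op (op x (op x x)) (op u u))) as C86.
  pose proof (Hel (op (op (op (op x (op x x)) (op u u)) (op (op x (op x x)) (op u u))) (op x (op x (op x x))))) as EL86a.
  pose proof (Hel (op (op x (op x x)) (op u u))) as EL86b.
  pose proof (Hc u (op x (op x (op x (op x (op x x)))))) as C87.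
  pose proof (Hel u) as EL87a.
  pose proof (Hel (op x (op x (op x (op x (op x x)))))) as EL87b.
  pose proof (Hc (op u (op x (op x (op x (op x (op x x)))))) (op (op x (op x x)) (op u u))) as C88.
  pose proof (Hel (op u (op x (op x (op x (op x (op x x))))))) as EL88a.
  pose proof (Hel (op (op x (op x x)) (op u u))) as EL88b.
  pose proof (Hc (op (op (op x (op x x)) (op u u)) (op (op x (op x x)) (op u u))) (op (op u (op x (op x (op x (op x (op x x)))))) (op (op x (op x x)) (op u u)))) as C89.
  pose proof (Hel (op (op (op x (op x x)) (op u u)) (op (op x (op x x)) (op u u)))) as EL89a.
  pose proof (Hel (op (op u (op x (op x (op x (op x (op x x)))))) (op (op x (op x x)) (op u u)))) as EL89b.
  pose proof (Hc (op (op (op x (op x x)) (op u u)) (op (op x (op x x)) (op u u))) (op u (op x (op x (op x (op x (op x x))))))) as C90.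
  pose proof (Hel (op (op (op x (op x x)) (op u u)) (op (op x (op x x)) (op u u)))) as EL90a.
  pose proof (Hel (op u (op x (op x (op x (op x (op x x))))))) as EL90b.
  pose proof (Hc (op (op (op (op x (op x x)) (op u u)) (op (op x (op x x)) (op u u))) (op u (op x (op x (op x (op x (op x x))))))) (op (op x (op x x)) (op u u))) as C91.
  pose proof (Hel (op (op (op (op x (op x x)) (op u u)) (op (op x (op x x)) (op u u))) (op u (op x (op x (op x (op x (op x x)))))))) as EL91a.
  pose proof (Hel (op (op x (op x x)) (op u u))) as EL91b.
  pose proof (Hc (op (op x (op x (op x x))) (op u u)) (op (op x (op x (op x x))) (op u u))) as C92.
  pose proof (Hel (op (op x (op x (op x x))) (op u u))) as EL92a.
  pose proof (Hel (op (op x (op x (op x x))) (op u u))) as EL92b.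
  pose proof (Hc u (op (op x (op x (op x x))) (op u u))) as C93.
  pose proof (Hel u) as EL93a.
  pose proof (Hel (op (op x (op x (op x x))) (op u u))) as EL93b.
  pose proof (Hc (op (op (op x (op x (op x x))) (op u u)) (op (op x (op x (op x x))) (op u u))) (op u (op (op x (op x (op x x))) (op u u)))) as C94.
  pose proof (Hel (op (op (op x (op x (op x x))) (op u u)) (op (op x (op x (op x x))) (op u u)))) as EL94a.
  pose proof (Hel (op u (op (op x (op x (op x x))) (op u u)))) as EL94b.
  pose proof (Hc (op (op (op x (op x (op x x))) (op u u)) (op (op x (op x (op x x))) (op u u))) u) as C95.
  pose proof (Hel (op (op (op x (op x (op x x))) (op u u)) (op (op x (op x (op x x))) (op u u)))) as EL95a.
  pose proof (Hel u) as EL95b.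
  pose proof (Hc (op (op (op (op x (op x (op x x))) (op u u)) (op (op x (op x (op x x))) (op u u))) u) (op (op x (op x (op x x))) (op u u))) as C96.
  pose proof (Hel (op (op (op (op x (op x (op x x))) (op u u)) (op (op x (op x (op x x))) (op u u))) u)) as EL96a.
  pose proof (Hel (op (op x (op x (op x x))) (op u u))) as EL96b.
  pose proof (Hc (op (op (op x (op x (op x x))) (op u u)) (op (op x (op x (op x x))) (op u u))) (op (op (op u u) (op u u)) (op (op x (op x (op x x))) (op u u)))) as C97.
  pose proof (Hel (op (op (op x (op x (op x x))) (op u u)) (op (op x (op x (op x x))) (op u u)))) as EL97a.
  pose proof (Hel (op (op (op u u) (op u u)) (op (op x (op x (op x x))) (op u u)))) as EL97b.
  pose proof (Hc (op (op (op x (op x (op x x))) (op u u)) (op (op x (op x (op x x))) (op u u))) (op (op u u) (op u u))) as C98.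
  pose proof (Hel (op (op (op x (op x (op x x))) (op u u)) (op (op x (op x (op x x))) (op u u)))) as EL98a.
  pose proof (Hel (op (op u u) (op u u))) as EL98b.
  pose proof (Hc (op (op (op (op x (op x (op x x))) (op u u)) (op (op x (op x (op x x))) (op u u))) (op (op u u) (op u u))) (op (op x (op x (op x x))) (op u u))) as C99.
  pose proof (Hel (op (op (op (op x (op x (op x x))) (op u u)) (op (op x (op x (op x x))) (op u u))) (op (op u u) (op u u)))) as EL99a.
  pose proof (Hel (op (op x (op x (op x x))) (op u u))) as EL99b.
  pose proof (Hc (op (op x (op x x)) (op u u)) (op (op x (op x (op x x))) (op u u))) as C100.
  pose proof (Hel (op (op x (op x x)) (op u u))) as EL100a.
  pose proof (Hel (op (op x (op x (op x x))) (op u u))) as EL100b.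
  pose proof (Hc (op (op (op x (op x (op x x))) (op u u)) (op (op x (op x (op x x))) (op u u))) (op (op (op x (op x x)) (op u u)) (op (op x (op x (op x x))) (op u u)))) as C101.
  pose proof (Hel (op (op (op x (op x (op x x))) (op u u)) (op (op x (op x (op x x))) (op u u)))) as EL101a.
  pose proof (Hel (op (op (op x (op x x)) (op u u)) (op (op x (op x (op x x))) (op u u)))) as EL101b.
  pose proof (Hc (op (op (op x (op x (op x x))) (op u u)) (op (op x (op x (op x x))) (op u u))) (op (op x (op x x)) (op u u))) as C102.
  pose proof (Hel (op (op (op x (op x (op x x))) (op u u)) (op (op x (op x (op x x))) (op u u)))) as EL102a.
  pose proof (Hel (op (op x (op x x)) (op u u))) as EL102b.
  pose proof (Hc (op (op (op (op x (op x (op x x))) (op u u)) (op (op x (op x (op x x))) (op u u))) (op (op x (op x x)) (op u u))) (op (op x (op x (op x x))) (op u u))) as C103.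
  pose proof (Hel (op (op (op (op x (op x (op x x))) (op u u)) (op (op x (op x (op x x))) (op u u))) (op (op x (op x x)) (op u u)))) as EL103a.
  pose proof (Hel (op (op x (op x (op x x))) (op u u))) as EL103b.
  pose proof (Hc (op (op (op x (op x (op x x))) (op u u)) (op (op x (op x (op x x))) (op u u))) (op (op (op x (op x (op x x))) (op u u)) (op (op x (op x (op x x))) (op u u)))) as C104.
  pose proof (Hel (op (op (op x (op x (op x x))) (op u u)) (op (op x (op x (op x x))) (op u u)))) as EL104a.
  pose proof (Hel (op (op (op x (op x (op x x))) (op u u)) (op (op x (op x (op x x))) (op u u)))) as EL104b.
  pose proof (Hc (op (op (op x (op x (op x x))) (op u u)) (op (op x (op x (op x x))) (op u u))) (op (op x (op x (op x x))) (op u u))) as C105.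
  pose proof (Hel (op (op (op x (op x (op x x))) (op u u)) (op (op x (op x (op x x))) (op u u)))) as EL105a.
  pose proof (Hel (op (op x (op x (op x x))) (op u u))) as EL105b.
  pose proof (Hc (op (op (op (op x (op x (op x x))) (op u u)) (op (op x (op x (op x x))) (op u u))) (op (op x (op x (op x x))) (op u u))) (op (op x (op x (op x x))) (op u u))) as C106.
  pose proof (Hel (op (op (op (op x (op x (op x x))) (op u u)) (op (op x (op x (op x x))) (op u u))) (op (op x (op x (op x x))) (op u u)))) as EL106a.
  pose proof (Hel (op (op x (op x (op x x))) (op u u))) as EL106b.
  pose proof (Hc (op (op x (op x (op x (op x x)))) (op u u)) (op (op x (op x (op x (op x x)))) (op u u))) as C107.
  pose proof (Hel (op (op x (op x (op x (op x x)))) (op u u))) as EL107a.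
  pose proof (Hel (op (op x (op x (op x (op x x)))) (op u u))) as EL107b.
  pose proof (Hc u (op (op x (op x (op x (op x x)))) (op u u))) as C108.
  pose proof (Hel u) as EL108a.
  pose proof (Hel (op (op x (op x (op x (op x x)))) (op u u))) as EL108b.
  pose proof (Hc (op (op (op x (op x (op x (op x x)))) (op u u)) (op (op x (op x (op x (op x x)))) (op u u))) (op u (op (op x (op x (op x (op x x)))) (op u u)))) as C109.
  pose proof (Hel (op (op (op x (op x (op x (op x x)))) (op u u)) (op (op x (op x (op x (op x x)))) (op u u)))) as EL109a.
  pose proof (Hel (op u (op (op x (op x (op x (op x x)))) (op u u)))) as EL109b.
  pose proof (Hc (op (op (op x (op x (op x (op x x)))) (op u u)) (op (op x (op x (op x (op x x)))) (op u u))) u) as C110.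
  pose proof (Hel (op (op (op x (op x (op x (op x x)))) (op u u)) (op (op x (op x (op x (op x x)))) (op u u)))) as EL110a.
  pose proof (Hel u) as EL110b.
  pose proof (Hc (op (op (op (op x (op x (op x (op x x)))) (op u u)) (op (op x (op x (op x (op x x)))) (op u u))) u) (op (op x (op x (op x (op x x)))) (op u u))) as C111.
  pose proof (Hel (op (op (op (op x (op x (op x (op x x)))) (op u u)) (op (op x (op x (op x (op x x)))) (op u u))) u)) as EL111a.
  pose proof (Hel (op (op x (op x (op x (op x x)))) (op u u))) as EL111b.
  pose proof (Hc (op x (op x (op x (op x (op x (op x e)))))) u) as C112.
  pose proof (Hel (op x (op x (op x (op x (op x (op x e))))))) as EL112a.
  pose proof (Hel u) as EL112b.
  pose proof (Hc (op x e) (op x (op x e))) as C113.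
  pose proof (Hel (op x e)) as EL113a.
  pose proof (Hel (op x (op x e))) as EL113b.
  pose proof (Hc (op x e) (op x (op x (op x e)))) as C114.
  pose proof (Hel (op x e)) as EL114a.
  pose proof (Hel (op x (op x (op x e)))) as EL114b.
  pose proof (Hc (op x e) (op x (op x (op x (op x e))))) as C115.
  pose proof (Hel (op x e)) as EL115a.
  pose proof (Hel (op x (op x (op x (op x e))))) as EL115b.
  pose proof (Hc (op x e) (op x (op x (op x (op x (op x e)))))) as C116.
  pose proof (Hel (op x e)) as EL116a.
  pose proof (Hel (op x (op x (op x (op x (op x e)))))) as EL116b.
  pose proof (Hc (op x e) (op x (op x (op x (op x (op x (op x e))))))) as C117.
  pose proof (Hel (op x e)) as EL117a.
  pose proof (Hel (op x (op x (op x (op x (op x (op x e))))))) as EL117b.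
  pose proof (Hc (op x e) (op x (op x (op x (op x (op x (op x (op x e)))))))) as C118.
  pose proof (Hel (op x e)) as EL118a.
  pose proof (Hel (op x (op x (op x (op x (op x (op x (op x e)))))))) as EL118b.
  pose proof (Hc (op x (op x e)) (op x e)) as C119.
  pose proof (Hel (op x (op x e))) as EL119a.
  pose proof (Hel (op x e)) as EL119b.
  pose proof (Hc (op x (op x e)) (op x (op x e))) as C120.
  pose proof (Hel (op x (op x e))) as EL120a.
  pose proof (Hel (op x (op x e))) as EL120b.
  pose proof (Hc (op x (op x e)) (op x (op x (op x e)))) as C121.
  pose proof (Hel (op x (op x e))) as EL121a.
  pose proof (Hel (op x (op x (op x e)))) as EL121b.
  pose proof (Hc (op x (op x e)) (op x (op x (op x (op x e))))) as C122.
  pose proof (Hel (op x (op x e))) as EL122a.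
  pose proof (Hel (op x (op x (op x (op x e))))) as EL122b.
  pose proof (Hc (op x (op x e)) (op x (op x (op x (op x (op x e)))))) as C123.
  pose proof (Hel (op x (op x e))) as EL123a.
  pose proof (Hel (op x (op x (op x (op x (op x e)))))) as EL123b.
  pose proof (Hc (op x (op x e)) (op x (op x (op x (op x (op x (op x e))))))) as C124.
  pose proof (Hel (op x (op x e))) as EL124a.
  pose proof (Hel (op x (op x (op x (op x (op x (op x e))))))) as EL124b.
  pose proof (Hc (op x (op x (op x e))) (op x e)) as C125.
  pose proof (Hel (op x (op x (op x e)))) as EL125a.
  pose proof (Hel (op x e)) as EL125b.
  pose proof (Hc (op x (op x (op x e))) (op x (op x e))) as C126.
  pose proof (Hel (op x (op x (op x e)))) as EL126a.
  pose proof (Hel (op x (op x e))) as EL126b.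
  pose proof (Hc (op x (op x (op x e))) (op x (op x (op x (op x e))))) as C127.
  pose proof (Hel (op x (op x (op x e)))) as EL127a.
  pose proof (Hel (op x (op x (op x (op x e))))) as EL127b.
  pose proof (Hc (op x (op x (op x e))) (op x (op x (op x (op x (op x e)))))) as C128.
  pose proof (Hel (op x (op x (op x e)))) as EL128a.
  pose proof (Hel (op x (op x (op x (op x (op x e)))))) as EL128b.
  pose proof (Hc (op x (op x (op x (op x e)))) (op x e)) as C129.
  pose proof (Hel (op x (op x (op x (op x e))))) as EL129a.
  pose proof (Hel (op x e)) as EL129b.
  pose proof (Hc (op x (op x (op x (op x e)))) (op x (op x e))) as C130.
  pose proof (Hel (op x (op x (op x (op x e))))) as EL130a.
  pose proof (Hel (op x (op x e))) as EL130b.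
  pose proof (Hc (op x (op x (op x (op x e)))) (op x (op x (op x e)))) as C131.
  pose proof (Hel (op x (op x (op x (op x e))))) as EL131a.
  pose proof (Hel (op x (op x (op x e)))) as EL131b.
  pose proof (Hc (op x (op x (op x (op x e)))) (op x (op x (op x (op x e))))) as C132.
  pose proof (Hel (op x (op x (op x (op x e))))) as EL132a.
  pose proof (Hel (op x (op x (op x (op x e))))) as EL132b.
  pose proof (Hc (op x (op x (op x (op x (op x e))))) (op x e)) as C133.
  pose proof (Hel (op x (op x (op x (op x (op x e)))))) as EL133a.
  pose proof (Hel (op x e)) as EL133b.
  pose proof (Hc (op x (op x (op x (op x (op x e))))) (op x (op x e))) as C134.
  pose proof (Hel (op x (op x (op x (op x (op x e)))))) as EL134a.
  pose proof (Hel (op x (op x e))) as EL134b.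
  pose proof (Hc (op x (op x (op x (op x (op x e))))) (op x (op x (op x e)))) as C135.
  pose proof (Hel (op x (op x (op x (op x (op x e)))))) as EL135a.
  pose proof (Hel (op x (op x (op x e)))) as EL135b.
  pose proof (Hc (op x (op x (op x (op x (op x (op x e)))))) (op x e)) as C136.
  pose proof (Hel (op x (op x (op x (op x (op x (op x e))))))) as EL136a.
  pose proof (Hel (op x e)) as EL136b.
  pose proof (Hc (op x (op x (op x (op x (op x (op x e)))))) (op x (op x e))) as C137.
  pose proof (Hel (op x (op x (op x (op x (op x (op x e))))))) as EL137a.
  pose proof (Hel (op x (op x e))) as EL137b.
  pose proof (Hc (op x (op x (op x (op x (op x (op x (op x e))))))) (op x e)) as C138.
  pose proof (Hel (op x (op x (op x (op x (op x (op x (op x e)))))))) as EL138a.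
  pose proof (Hel (op x e)) as EL138b.
  assert (K0 : x = (op (op x x) u)) by (apply (Hcan x); congruence).
  assert (K1 : u = (op (op u u) x)) by (apply (Hcan u); congruence).
  assert (K2 : e = (op (op x x) (op u u))) by (apply (Hcan x); congruence).
  assert (K3 : (op x x) = (op (op x (op x (op x x))) (op u u))) by (apply (Hcan (op x x)); congruence).
  assert (K4 : (op u u) = (op (op (op u u) (op u u)) (op (op x (op x (op x x))) (op u u)))) by (apply (Hcan (op u u)); congruence).
  assert (K5 : (op (op (op x (op x (op x x))) (op u u)) x) = (op (op (op (op x (op x (op x x))) (op u u)) (op (op x (op x (op x x))) (op u u))) u)) by (apply (Hcan (op x x)); congruence).
  assert (K6 : (op (op u u) u) = (op (op (op u u) (op u u)) (op (op x (op x x)) (op u u)))) by (apply (Hcan (op u u)); congruence).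
  assert (K7 : (op u x) = (op (op (op (op x (op x (op x x))) (op u u)) (op (op x (op x (op x x))) (op u u))) (op (op u u) (op u u)))) by (apply (Hcan (op x x)); congruence).
  assert (K8 : (op (op (op x (op x x)) (op x (op x x))) (op u u)) = (op (op (op x (op x (op x x))) (op u u)) (op (op x (op x (op x x))) (op u u)))) by (apply (Hcan (op x (op x x))); congruence).
  assert (K9 : u = (op (op (op u u) (op u u)) (op x (op x x)))) by (apply (Hcan (op u u)); congruence).
  assert (K10 : (op x x) = (op (op (op u u) (op u u)) (op x (op x (op x (op x (op x x))))))) by (apply (Hcan (op u u)); congruence).
  assert (K11 : (op x x) = (op (op (op x (op x (op x (op x x)))) (op u u)) u)) by (apply (Hcan (op u u)); congruence).  assert (F : forall l r, 1 <= l -> 1 <= r -> l + r <= 8 ->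
        op (xpow op e l x) (xpow op e r x) = xpow op e (l + r) x).
  { intros l r Hl Hr Hlr.
    destruct l as [|[|[|[|[|[|[|[|l]]]]]]]]; try lia;
    destruct r as [|[|[|[|[|[|[|[|r]]]]]]]]; try lia; simpl; congruence. }
  assert (W : op (xpow op e 6 x) u = xpow op e 5 x) by (simpl; congruence).
  split; [|split; [|split]].
  - apply wd_final; auto; intros; apply F; lia.
  - apply wd_final; auto; intros; apply F; lia.
  - intros xinv H1 H2. assert (xinv = u) by (apply (Hcan x); congruence).
    subst; exact W.
  - apply wd_final; auto.
Qed.
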